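(* Let $\triangle$ be an apexed triangle and $f_\triangle:\mathbb{R}^2\to\mathbb{R}$ the associated distance function. Then for all $x_1,x_2\in\mathbb{R}^2$, $|f_\triangle(x_1)-f_\triangle(x_2)|\le\|x_1-x_2\|$.
   Context: $\|\cdot\|$ is the Euclidean norm and $\langle\cdot,\cdot\rangle$ the Euclidean inner product in $\mathbb{R}^2$. An apexed triangle $\triangle$ (in a simple polygon $P$ with sites $S$ and geodesic distance $d$) is a triangle with corners $a$ (apex), $b,c$ (so $0<\angle bac<\pi$), together with a site $s$ (definer); only $a,b,c$ and the constant $d(a,s)$ matter here. Let $u_1=(b-a)/\|b-a\|$ and $u_2=(c-a)/\|c-a\|$. Let $R_{in}=\{a+\lambda u_1+\mu u_2:\lambda,\mu\ge0\}$. Let $L=\{x\notin R_{in}:\langle x-a,u_1\rangle\ge\langle x-a,u_2\rangle\}$ and $R=\{x\notin R_{in}:\langle x-a,u_2\rangle>\langle x-a,u_1\rangle\}$ (so $L$ and $R$ are separated by the halfline from $a$ bisecting the angle at $a$ that points away from $\triangle$). Split $L$ into $L_{top}=\{x\in L:\langle x-a,u_1\rangle<0\}$ and $L_{side}=L\setminus L_{top}$, and similarly $R_{top}=\{x\in R:\langle x-a,u_2\rangle<0\}$, $R_{side}=R\setminus R_{top}$. For $x\in L$ let $\hat x$ be the orthogonal projection of $x$ onto the line through $a$ with direction $u_1$; for $x\in R$ let $\hat x$ be the orthogonal projection onto the line through $a$ with direction $u_2$; for $x\in R_{in}$ let $\hat x=x$. Define $f_\triangle(x)=d(a,s)-\|\hat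 x-a\|$ if $x\in L_{top}\cup R_{top}$, and $f_\triangle(x)=d(a,s)+\|\hat x-a\|$ otherwise. *)

(* Defs.v *)
From Stdlib Require Import Reals Lra ClassicalDescription.
Open Scope R_scope.

Definition pt := (R * R)%type.

Definition vadd (x y : pt) : pt := (fst x + fst y, snd x + snd y).
Definition vsub (x y : pt) : pt := (fst x - fst y, snd x - snd y).
Definition vscale (k : R) (x : pt) : pt := (k * fst x, k * snd x).
Definition dot (x y : pt) : R := fst x * fst y + snd x * snd y.
Definition norm (x : pt) : R := sqrt (dot x x).

Definition unitv (a b : pt) : pt := vscale (/ norm (vsub b a)) (vsub b a).

Definition angle (b a c : pt) : R := acos (dot (unitv a b) (unitv a c)).

Definition in_Rin (a b c x : pt) : Prop :=
  exists lam mu : R, 0 <= lam /\ 0 <= mu /\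
    x = vadd a (vadd (vscale lam (unitv a b)) (vscale mu (unitv a c))).

Definition in_L (a b c x : pt) : Prop :=
  ~ in_Rin a b c x /\ dot (vsub x a) (unitv a b) >= dot (vsub x a) (unitv a c).
Definition in_R (a b c x : pt) : Prop :=
  ~ in_Rin a b c x /\ dot (vsub x a) (unitv a c) > dot (vsub x a) (unitv a b).
Definition in_Ltop (a b c x : pt) : Prop :=
  in_L a b c x /\ dot (vsub x a) (unitv a b) < 0.
Definition in_Rtop (a b c x : pt) : Prop :=
  in_R a b c x /\ dot (vsub x a) (unitv a c) < 0.

Definition proj_line (a u x : pt) : pt := vadd a (vscale (dot (vsub x a) u) u).

Definition hat (a b c x : pt) : pt :=
  if excluded_middle_informative (in_L a b c x) then proj_line a (unitv a b) x
  else if excluded_middle_informative (in_R a b c x) then proj_line a (unitv a c) x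
  else x.

(* f_triangle, where D = d(a,s) *)
Definition f_tri (a b c : pt) (D : R) (x : pt) : R :=
  if excluded_middle_informative (in_Ltop a b c x \/ in_Rtop a b c x)
  then D - norm (vsub (hat a b c x) a)
  else D + norm (vsub (hat a b c x) a).

(* Main.v *)
Require Import Defs.
From Stdlib Require Import Reals Lra Psatz Classical ClassicalDescription.
Open Scope R_scope.

Lemma arc1 (c l m : R) : -1<=c<=1 -> 0<=l -> 0<=m -> l*l+m*m+2*l*m*c = 1 -> l + m*c >= c.
Proof. intros Hc Hl Hm H.
destruct (Rle_dec ((1-m)*c) l). lra.
apply Rnot_le_lt in n. exfalso. set (L := (1-m)*c) in *.
assert (HL: L*L+m*m+2*L*m*c = c*c*(1-m*m) + m*m) by (unfold L; ring).
assert (E: (L*L+m*m+2*L*m*c) - (l*l+m*m+2*l*m*c) = (L-l)*(L+l+2*m*c)) by ring.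
destruct (Rle_dec c 0).
- (* c<=0: L>l>=0 means (1-m)c>0 so m>1 *)
  assert (m > 1) by (unfold L in n; destruct (Rle_dec m 1) as [Hm1|Hm1]; [assert (0 <= (1-m)*(-c)) by (apply Rmult_le_pos; lra); lra | lra]).
  assert (L+l+2*m*c < 0) by (unfold L; nra).
  assert (c*c*(1-m*m) + m*m >= 1) by (assert (0 <= (m*m-1)*(1-c*c)) by (apply Rmult_le_pos; nra); nra).
  nra.
- assert (m < 1) by (unfold L in n; destruct (Rle_dec 1 m) as [Hm1|Hm1]; [assert (0 <= (m-1)*c) by (apply Rmult_le_pos; lra); lra | lra]).
  assert (L+l+2*m*c > 0) by (unfold L; nra).
  assert (c*c*(1-m*m) + m*m <= 1) by (assert (0 <= (1-m*m)*(1-c*c)) by (apply Rmult_le_pos; nra); nra).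
  nra.
Qed.
Lemma arc2 (c l m : R) : -1<=c<=1 -> 0<=l -> 0<=m -> l*l+m*m+2*l*m*c = 1 -> l + m >= 1.
Proof. intros. assert (0 <= l*m*(1-c)) by (apply Rmult_le_pos; [apply Rmult_le_pos|]; lra). assert ((l+m)*(l+m) >= 1) by nra. nra. Qed.
Lemma arc3 (c l m : R) : -1<=c<=1 -> 0<=l -> 0<=m -> l*l+m*m+2*l*m*c = 1 -> l + m*c <= 1.
Proof. intros. assert (0 <= m*m*(1-c*c)) by (apply Rmult_le_pos; nra). assert ((l+m*c)*(l+m*c) <= 1) by nra. nra. Qed.
Lemma comb (al be c a1 a2 : R) : -1<=c<=1 -> c <= a1 <= 1 -> c <= a2 <= 1 -> a1 + a2 >= 1 + c ->
  (al < 0 \/ be < 0) -> al*a1 + be*a2 <= Rmax (al + be*c) (al*c+be).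
Proof.
intros Hc H1 H2 H12 Hab.
destruct (Rle_dec 0 be), (Rle_dec 0 al).
- lra.
- assert (al*a1 <= al*c) by nra. assert (be*a2 <= be) by nra.
  eapply Rle_trans; [|apply Rmax_r]. lra.
- assert (be*a2 <= be*c) by nra. assert (al*a1 <= al) by nra.
  eapply Rle_trans; [|apply Rmax_l]. lra.
- destruct (Rle_dec al be).
  + assert (al*(a2-c) <= be*(a2-c)) by nra.
    assert (be*(a1-c+a2-c) <= be*(1-c)) by nra.
    eapply Rle_trans; [|apply Rmax_r]. nra.
  + assert (be*(a1-c) <= al*(a1-c)) by nra.
    assert (al*(a1-c+a2-c) <= al*(1-c)) by nra.
    eapply Rle_trans; [|apply Rmax_l]. nra.
Qed.

Lemma upper_out (u1x u1y u2x u2y yx yy l m : R) :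
 u1x*u1x+u1y*u1y=1 -> u2x*u2x+u2y*u2y=1 -> -1 < u1x*u2x+u1y*u2y < 1 -> 0<=l -> 0<=m ->
 (l*u1x+m*u2x)*(l*u1x+m*u2x)+(l*u1y+m*u2y)*(l*u1y+m*u2y) = 1 ->
 ~ (exists l' m', 0<=l' /\ 0<=m' /\ yx = l'*u1x+m'*u2x /\ yy = l'*u1y+m'*u2y) ->
 yx*(l*u1x+m*u2x)+yy*(l*u1y+m*u2y) <= Rmax (yx*u1x+yy*u1y) (yx*u2x+yy*u2y).
Proof.
intros U1 U2 Hc Hl Hm Hv Hout.
set (c := u1x*u2x+u1y*u2y) in *.
set (s := u1x*u2y - u1y*u2x).
assert (Hs : s*s = 1 - c*c).
{ unfold s, c. transitivity ((u1x*u1x+u1y*u1y)*(u2x*u2x+u2y*u2y) - (u1x*u2x+u1y*u2y)*(u1x*u2x+u1y*u2y)); [ring|]. rewrite U1, U2. ring. }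
assert (Hs0 : s <> 0) by (intro E; rewrite E in Hs; nra).
assert (Hdec : exists al be, yx = al*u1x+be*u2x /\ yy = al*u1y+be*u2y).
{ exists ((yx*u2y - yy*u2x)/s), ((u1x*yy - u1y*yx)/s). unfold s in *. split; field; auto. }
destruct Hdec as [al [be [Ex Ey]]].
assert (Hab : al < 0 \/ be < 0).
{ destruct (Rlt_dec al 0); [now left|]. destruct (Rlt_dec be 0); [now right|].
  exfalso. apply Hout. exists al, be. repeat split; lra. }
subst yx yy.
assert (Hvv : l*l+m*m+2*l*m*c = 1).
{ rewrite <- Hv. transitivity (l*l*(u1x*u1x+u1y*u1y) + m*m*(u2x*u2x+u2y*u2y) + 2*l*m*c).
  rewrite U1, U2; ring. unfold c; ring. }
assert (E1 : (al*u1x+be*u2x)*(l*u1x+m*u2x)+(al*u1y+be*u2y)*(l*u1y+m*u2y)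
   = al*(l*(u1x*u1x+u1y*u1y)+m*c) + be*(l*c+m*(u2x*u2x+u2y*u2y))) by (unfold c; ring).
assert (E2 : (al*u1x+be*u2x)*u1x+(al*u1y+be*u2y)*u1y = al*(u1x*u1x+u1y*u1y) + be*c) by (unfold c; ring).
assert (E3 : (al*u1x+be*u2x)*u2x+(al*u1y+be*u2y)*u2y = al*c + be*(u2x*u2x+u2y*u2y)) by (unfold c; ring).
rewrite E1, E2, E3, U1, U2.
replace (al*1) with al by ring. replace (be*1) with be by ring.
replace (l*1) with l by ring. replace (m*1) with m by ring.
apply comb; try lra.
- pose proof (arc1 c l m ltac:(lra) Hl Hm Hvv). pose proof (arc3 c l m ltac:(lra) Hl Hm Hvv). lra.
- pose proof (arc1 c m l ltac:(lra) Hm Hl ltac:(lra)). pose proof (arc3 c m l ltac:(lra) Hm Hl ltac:(lra)). lra.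
- pose proof (arc2 c l m ltac:(lra) Hl Hm Hvv). nra.
Qed.

Lemma dot_nonneg (y : pt) : 0 <= dot y y.
Proof. destruct y; unfold dot; simpl; nra. Qed.

Lemma unit_dot (a b : pt) : b <> a -> dot (unitv a b) (unitv a b) = 1.
Proof.
intro Hba. unfold unitv, norm.
set (w := vsub b a).
assert (Hw : 0 < dot w w).
{ destruct (Rle_lt_or_eq_dec 0 (dot w w) (dot_nonneg w)) as [h|h]; auto.
  exfalso. apply Hba. destruct a as [a1 a2], b as [b1 b2]; unfold w, dot, vsub in h; simpl in h.
  clear w. pose proof (Rle_0_sqr (b1-a1)). pose proof (Rle_0_sqr (b2-a2)). unfold Rsqr in *. assert (b1 - a1 = 0) by nra. assert (b2 - a2 = 0) by nra. f_equal; lra. }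
pose proof (sqrt_sqrt _ (Rlt_le _ _ Hw)). pose proof (sqrt_lt_R0 _ Hw).
set (n := sqrt (dot w w)) in *.
transitivity (/n * /n * dot w w).
{ destruct w; unfold dot, vscale; simpl. ring. }
rewrite <- H. field. lra.
Qed.

Lemma cs (y v : pt) : dot v v = 1 -> dot y v <= norm y.
Proof. intro Hv. unfold norm. destruct (Rle_dec (dot y v) 0).
- pose proof (sqrt_pos (dot y y)); lra.
- rewrite <- (sqrt_Rsqr (dot y v)) by lra. apply sqrt_le_1_alt.
  unfold Rsqr. destruct y, v; unfold dot in *; simpl in *.
  pose proof (Rle_0_sqr (r*r2 - r0*r1)). unfold Rsqr in H. nra.
Qed.

Lemma proj_norm (a u x : pt) : dot u u = 1 -> norm (vsub (proj_line a u x) a) = Rabs (dot (vsub x a) u).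
Proof. intro Hu. unfold proj_line. set (p := dot (vsub x a) u). clearbody p.
unfold norm. rewrite <- sqrt_Rsqr_abs. f_equal.
destruct a, u; unfold dot, vsub, vadd, vscale, Rsqr in *; simpl in *.
transitivity (p*p*(r1*r1+r2*r2)); [ring|]. rewrite Hu; ring.
Qed.

Definition gfun (a b c x : pt) : R :=
  if excluded_middle_informative (in_Rin a b c x) then norm (vsub x a)
  else Rmax (dot (vsub x a) (unitv a b)) (dot (vsub x a) (unitv a c)).

Lemma f_eq (a b c : pt) (D : R) (x : pt) : b <> a -> c <> a ->
  f_tri a b c D x = D + gfun a b c x.
Proof.
intros Hb Hc. pose proof (unit_dot a b Hb) as U1. pose proof (unit_dot a c Hc) as U2.
unfold f_tri, gfun, hat, in_Ltop, in_Rtop, in_L, in_R.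
destruct (excluded_middle_informative (in_Rin a b c x)) as [Hin|Hin].
- destruct (excluded_middle_informative _) as [H|H]; [tauto|].
  destruct (excluded_middle_informative _) as [H1|H1]; [tauto|].
  destruct (excluded_middle_informative _) as [H2|H2]; [tauto|]. reflexivity.
- set (p1 := dot (vsub x a) (unitv a b)). set (p2 := dot (vsub x a) (unitv a c)).
  destruct (Rle_dec p2 p1).
  + rewrite Rmax_left by lra.
    destruct (excluded_middle_informative (~ in_Rin a b c x /\ p1 >= p2)) as [H|H]; [|exfalso; apply H; split; auto; lra].
    rewrite proj_norm by auto. fold p1.
    destruct (excluded_middle_informative _) as [H1|H1].
    * destruct H1 as [[_ H1]|[[_ H1] _]]; [|lra]. rewrite Rabs_left by lra. ring.
    * rewrite Rabs_right; [ring|]. destruct (Rle_dec 0 p1); [lra|].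
      exfalso; apply H1; left; split; auto; lra.
  + rewrite Rmax_right by lra.
    destruct (excluded_middle_informative (~ in_Rin a b c x /\ p1 >= p2)) as [H|H]; [lra|].
    destruct (excluded_middle_informative (~ in_Rin a b c x /\ p2 > p1)) as [H'|H']; [|exfalso; apply H'; split; auto; lra].
    rewrite proj_norm by auto. fold p2.
    destruct (excluded_middle_informative _) as [H1|H1].
    * destruct H1 as [[[_ H1] _]|[_ H1]]; [lra|]. rewrite Rabs_left by lra. ring.
    * rewrite Rabs_right; [ring|]. destruct (Rle_dec 0 p2); [lra|].
      exfalso; apply H1; right; split; auto; lra.
Qed.

Lemma cos_bounds (a b c : pt) : 0 < angle b a c < PI -> -1 < dot (unitv a b) (unitv a c) < 1.
Proof.
unfold angle, acos. intro H.
destruct (Rle_dec _ (-1)); [lra|]. destruct (Rle_dec 1 _); [lra|]. lra.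
Qed.

Definition arcv (a b c : pt) (l m : R) : pt := vadd (vscale l (unitv a b)) (vscale m (unitv a c)).

Lemma upper (a b c x : pt) (l m : R) : b <> a -> c <> a -> 0 < angle b a c < PI ->
  0 <= l -> 0 <= m -> dot (arcv a b c l m) (arcv a b c l m) = 1 ->
  dot (vsub x a) (arcv a b c l m) <= gfun a b c x.
Proof.
intros Hb Hc Ha Hl Hm Hv.
pose proof (unit_dot a b Hb) as U1. pose proof (unit_dot a c Hc) as U2.
pose proof (cos_bounds a b c Ha) as Hcos.
unfold gfun. destruct (excluded_middle_informative (in_Rin a b c x)) as [Hin|Hin].
- apply cs; auto.
- unfold arcv in *. unfold in_Rin in Hin.
  destruct (unitv a b) as [u1x u1y], (unitv a c) as [u2x u2y], x as [x1 x2], a as [a1 a2].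
  unfold dot, vsub, vadd, vscale in *; simpl in *.
  apply upper_out; auto.
  intros [l' [m' [H1 [H2 [E1 E2]]]]]. apply Hin. exists l', m'. repeat split; auto.
  f_equal; lra.
Qed.

Lemma arcv10 (a b c : pt) : arcv a b c 1 0 = unitv a b.
Proof. unfold arcv. destruct (unitv a b), (unitv a c). unfold vadd, vscale; simpl. f_equal; ring. Qed.
Lemma arcv01 (a b c : pt) : arcv a b c 0 1 = unitv a c.
Proof. unfold arcv. destruct (unitv a b), (unitv a c). unfold vadd, vscale; simpl. f_equal; ring. Qed.
Lemma dot_sc2 (k : R) (y : pt) : dot (vscale k y) (vscale k y) = k*k*dot y y.
Proof. destruct y; unfold dot, vscale; simpl; ring. Qed.
Lemma dot_sc1 (k : R) (y : pt) : dot y (vscale k y) = k*dot y y.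
Proof. destruct y; unfold dot, vscale; simpl; ring. Qed.

Lemma witness (a b c x : pt) : b <> a -> c <> a ->
  exists l m, 0 <= l /\ 0 <= m /\ dot (arcv a b c l m) (arcv a b c l m) = 1 /\
    gfun a b c x = dot (vsub x a) (arcv a b c l m).
Proof.
intros Hb Hc.
pose proof (unit_dot a b Hb) as U1. pose proof (unit_dot a c Hc) as U2.
unfold gfun. destruct (excluded_middle_informative (in_Rin a b c x)) as [Hin|Hin].
- destruct Hin as [lam [mu [Hl [Hm Ex]]]].
  assert (Ey : vsub x a = arcv a b c lam mu).
  { rewrite Ex. unfold arcv. generalize (vadd (vscale lam (unitv a b)) (vscale mu (unitv a c))). intro w. destruct a, w. unfold vsub, vadd; simpl. f_equal; ring. }
  rewrite Ey. clear Ex Ey.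
  set (y := arcv a b c lam mu).
  pose proof (sqrt_sqrt _ (dot_nonneg y)) as Hs. fold (norm y) in Hs.
  destruct (Rle_lt_or_eq_dec 0 (norm y) (sqrt_pos _)) as [Hn|Hn].
  + exists (lam / norm y), (mu / norm y).
    assert (Ev : arcv a b c (lam / norm y) (mu / norm y) = vscale (/ norm y) y).
    { assert (Hn0 : norm y <> 0) by lra. generalize (norm y) Hn0. intros n Hn1.
      unfold y, arcv. destruct (unitv a b), (unitv a c). unfold vadd, vscale; simpl. f_equal; field; lra. }
    rewrite Ev, dot_sc2, dot_sc1, <- Hs.
    repeat split.
    * apply Rmult_le_pos; auto. left; apply Rinv_0_lt_compat; auto.
    * apply Rmult_le_pos; auto. left; apply Rinv_0_lt_compat; auto.
    * field. lra.
    * field. lra.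
  + exists 1, 0. rewrite arcv10. repeat split; try lra; auto.
    rewrite <- Hn. rewrite <- Hn in Hs.
    assert (Hyy : dot y y = 0) by lra.
    destruct y as [y1 y2], (unitv a b). unfold dot in *; simpl in *.
    assert (y1 = 0) by nra. assert (y2 = 0) by nra. subst. ring.
- unfold Rmax. destruct (Rle_dec _ _).
  + exists 0, 1. rewrite arcv01. repeat split; auto; lra.
  + exists 1, 0. rewrite arcv10. repeat split; auto; lra.
Qed.

Theorem mainTheorem8 (a b c : pt) (D : R) :
  b <> a -> c <> a -> 0 < angle b a c < PI -> 0 <= D ->
  forall x1 x2 : pt,
    Rabs (f_tri a b c D x1 - f_tri a b c D x2) <= norm (vsub x1 x2).
Proof.
intros Hb Hc Ha HD x1 x2.
rewrite !f_eq by auto.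
assert (K : forall y1 y2, gfun a b c y1 - gfun a b c y2 <= norm (vsub y1 y2)).
{ intros y1 y2. destruct (witness a b c y1 Hb Hc) as [l [m [Hl [Hm [Hv E]]]]].
  pose proof (upper a b c y2 l m Hb Hc Ha Hl Hm Hv).
  pose proof (cs (vsub y1 y2) _ Hv).
  assert (dot (vsub y1 a) (arcv a b c l m) - dot (vsub y2 a) (arcv a b c l m) = dot (vsub y1 y2) (arcv a b c l m))
    by (generalize (arcv a b c l m); intro v; destruct y1, y2, a, v; unfold dot, vsub; simpl; ring).
  lra. }
assert (Hsym : norm (vsub x2 x1) = norm (vsub x1 x2)).
{ unfold norm. f_equal. destruct x1, x2; unfold dot, vsub; simpl; ring. }
pose proof (K x1 x2). pose proof (K x2 x1). apply Rabs_le. lra.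
Qed.
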